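(* For every positive integer $g$, there exists a $2$-coverable loopless binary matroid $M$ such that in any rank-preserving rainbow circuit-free coloring of $M$, one of the colors is used at least $g$ times.
   Context: A coloring of the ground set $S$ of $M$ is a partition of $S$ into nonempty color classes; it is rainbow circuit-free if no circuit of $M$ has all its elements of pairwise different colors, and rank-preserving if the number of colors equals the rank of $M$. A matroid is $k$-coverable if its ground set can be covered by at most $k$ independent sets. A matroid is binary if it is representable over $GF(2)$. *)

(* Defs.v *)
From HB Require Import structures.
From mathcomp Require Import all_boot all_order all_algebra.
Set Implicit Arguments. Unset Strict Implicit. Unset Printing Implicit Defensive.
Import GRing.Theory.
Local Open Scope ring_scope.

(* A matroid with ground set [set: T], given by its independent sets. *)
Record matroid (T : finType) := Matroid {
  indep : {set T} -> bool;
  indep0 : indep set0;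
  indep_sub : forall A B : {set T}, A \subset B -> indep B -> indep A;
  indep_aug : forall A B : {set T}, indep A -> indep B -> (#|A| < #|B|)%N ->
     exists2 x, x \in B :\: A & indep (x |: A)
}.

Section MatroidDefs.
Variables (T : finType) (M : matroid T).

Definition circuit (C : {set T}) : bool :=
  ~~ indep M C && [forall D : {set T}, (D \proper C) ==> indep M D].

Definition mrank : nat := (\max_(A : {set T} | indep M A) #|A|)%N.

Definition loopless : Prop := forall C, circuit C -> #|C| <> 1%N.

Definition coverable (k : nat) : Prop :=
  exists Is : seq {set T}, (size Is <= k)%N /\ all (indep M) Is /\
    \bigcup_(I <- Is) I = [set: T].

Definition binary : Prop :=
  exists (n : nat) (f : T -> 'rV['F_2]_n),
    forall A : {set T}, indep M A = free (map f (enum A)).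

Definition coloring (P : {set {set T}}) : Prop := partition P [set: T].

Definition rainbow (P : {set {set T}}) (C : {set T}) : Prop :=
  {in C &, forall x y, pblock P x = pblock P y -> x = y}.

Definition rainbow_circuit_free (P : {set {set T}}) : Prop :=
  forall C, circuit C -> ~ rainbow P C.

Definition rank_preserving (P : {set {set T}}) : Prop := #|P| = mrank.

End MatroidDefs.

(* Main.v *)
Require Import Defs.
From mathcomp Require Import all_boot all_order all_algebra.
From mathcomp Require Import zify.
Set Implicit Arguments. Unset Strict Implicit. Unset Printing Implicit Defensive.
Import GRing.Theory.
Local Open Scope ring_scope.


Section VecMatroid.
Variables (F : fieldType) (T : finType) (n : nat) (f : T -> 'rV[F]_n).

Definition vindep (A : {set T}) := free (map f (enum A)).

Lemma vindep0 : vindep set0.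
Proof. by rewrite /vindep enum_set0 /= nil_free. Qed.

Lemma enum_split (A B : {set T}) : A \subset B ->
  perm_eq (enum B) (enum A ++ enum (B :\: A)).
Proof.
move=> sAB; apply: uniq_perm; first exact: enum_uniq.
  rewrite cat_uniq !enum_uniq /= andbT; apply/hasPn => x.
  by rewrite !mem_enum inE => /andP[].
move=> x; rewrite mem_cat !mem_enum inE.
by case xA: (x \in A) => //=; rewrite (subsetP sAB).
Qed.

Lemma vindep_sub (A B : {set T}) : A \subset B -> vindep B -> vindep A.
Proof.
move=> sAB; rewrite /vindep (perm_free (perm_map f (enum_split sAB))) map_cat.
exact: catl_free.
Qed.

Lemma enum_setU1 (x : T) (A : {set T}) : x \notin A ->
  perm_eq (enum (x |: A)) (x :: enum A).
Proof.
move=> xA; apply: uniq_perm; first exact: enum_uniq.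
  by rewrite /= mem_enum xA enum_uniq.
by move=> y; rewrite in_cons !mem_enum !inE.
Qed.

Lemma vindepU1 (x : T) (A : {set T}) : x \notin A ->
  vindep (x |: A) = (f x \notin <<map f (enum A)>>)%VS && vindep A.
Proof.
by move=> xA; rewrite /vindep (perm_free (perm_map f (enum_setU1 xA))) /= free_cons.
Qed.

Lemma vindep_aug (A B : {set T}) : vindep A -> vindep B -> (#|A| < #|B|)%N ->
  exists2 x, x \in B :\: A & vindep (x |: A).
Proof.
move=> iA iB ltAB.
have [/existsP[x /andP[xBA ix]]|none] := boolP [exists x, (x \in B :\: A) && vindep (x |: A)].
  by exists x.
exfalso; move: ltAB; apply/negP; rewrite -leqNgt.
have sub : (<<map f (enum B)>> <= <<map f (enum A)>>)%VS.
  apply/span_subvP => v /mapP[x]; rewrite mem_enum => xB ->.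
  have [xA|xA] := boolP (x \in A).
    by apply: memv_span; apply: map_f; rewrite mem_enum.
  have : ~~ vindep (x |: A).
    apply: contra none => ix; apply/existsP; exists x.
    by rewrite ix inE xA xB.
  by rewrite vindepU1 // iA andbT negbK.
move/dimvS: sub; move: iA iB; rewrite /vindep /free => /eqP -> /eqP ->.
by rewrite !size_map -!cardE.
Qed.

Definition vmatroid := @Matroid T vindep vindep0 vindep_sub vindep_aug.

End VecMatroid.

Section FreeSeq.
Variables (F : fieldType) (T : eqType) (n : nat) (f : T -> 'rV[F]_n).

Lemma free_mapP (s : seq T) : uniq s ->
  free (map f s) <-> (forall lam : T -> F, \sum_(p <- s) lam p *: f p = 0 ->
                         forall p, p \in s -> lam p = 0).
Proof.
elim: s => [|x s IH] /=.
  by move=> _; split => // _; rewrite nil_free.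
case/andP=> xs us; rewrite free_cons; split.
  case/andP=> xspan fs lam; rewrite big_cons => hsum.
  have lx : lam x = 0.
    apply/eqP; apply: contraR xspan => lx0.
    have -> : f x = - (lam x)^-1 *: \sum_(p <- s) lam p *: f p.
      apply: (scalerI lx0); rewrite scalerA mulrN mulfV // scaleN1r.
      by apply/eqP; rewrite -addr_eq0 hsum.
    apply: rpredZ; rewrite big_seq; apply: rpred_sum => p ps; apply: rpredZ.
    by apply: memv_span; apply: map_f.
  move: hsum; rewrite lx scale0r add0r => hsum.
  move=> p; rewrite in_cons => /orP[/eqP -> //|ps].
  by apply: (proj1 (IH us) fs lam hsum).
move=> H.
have fs : free (map f s).
  apply/(IH us) => lam hsum p ps.
  pose lam' q := if q == x then 0 else lam q.
  have := H lam'; rewrite big_cons /lam' eqxx scale0r add0r.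
  have -> : \sum_(p0 <- s) (if p0 == x then 0 else lam p0) *: f p0 =
            \sum_(p0 <- s) lam p0 *: f p0.
    rewrite big_seq_cond [RHS]big_seq_cond; apply: eq_bigr => q /andP[qs _].
    by case: eqP => // qx; rewrite -qx qs in xs.
  move=> /(_ hsum p); rewrite in_cons ps orbT => /(_ isT).
  by case: eqP => // px; rewrite -px ps in xs.
rewrite fs andbT; apply/negP => xspan.
have [k kdef _] := free_span fs xspan.
pose lam q := if q == x then -1 else k (f q).
have := H lam; rewrite big_cons /lam eqxx.
have -> : \sum_(p0 <- s) (if p0 == x then -1 else k (f p0)) *: f p0 =
          \sum_(p0 <- s) k (f p0) *: f p0.
  rewrite big_seq_cond [RHS]big_seq_cond; apply: eq_bigr => q /andP[qs _].
  by case: eqP => // qx; rewrite -qx qs in xs.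
rewrite -(big_map f xpredT (fun v => k v *: v)) -kdef scaleN1r addNr.
move=> /(_ erefl x); rewrite in_cons eqxx => /(_ isT) /eqP.
by rewrite oppr_eq0 oner_eq0.
Qed.
End FreeSeq.

Section FreeSet.
Variables (F : fieldType) (T : finType) (n : nat) (f : T -> 'rV[F]_n).

Lemma vindepP (A : {set T}) : vindep f A <->
  (forall lam : T -> F, \sum_(p in A) lam p *: f p = 0 -> forall p, p \in A -> lam p = 0).
Proof.
have E := free_mapP f (enum_uniq (mem A)); rewrite /vindep.
split=> [/E H lam|H].
  by rewrite -big_enum /= => /H hl p pA; apply: hl; rewrite mem_enum.
apply/E => lam hs p pA; apply: (H lam); last by rewrite -mem_enum.
by rewrite -big_enum.
Qed.
End FreeSet.

Lemma F2_11 : (1 + 1 : 'F_2) = 0. Proof. by apply/val_inj. Qed.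
Lemma F2_cases (x : 'F_2) : x = 0 \/ x = 1.
Proof. case: x => [[|[|i]] Hi]; [left|right|]; try exact: val_inj. by []. Qed.
Lemma F2_nat n : (n%:R : 'F_2) = (odd n)%:R.
Proof. elim: n => // n IH. rewrite -[n.+1]addn1 natrD IH addn1 /=. by case: (odd n) => /=; rewrite ?F2_11 ?add0r. Qed.
Lemma F2_neq0 (x : 'F_2) : x != 0 -> x = 1.
Proof. by case: (F2_cases x) => ->. Qed.
Lemma F2_1n0 : (1 : 'F_2) != 0. Proof. by []. Qed.

Lemma setU1_neq0 (T : finType) (x : T) (A : {set T}) : x |: A != set0.
Proof. by apply/set0Pn; exists x; rewrite !inE eqxx. Qed.

Section Source.
Variables (K E : finType) (cls : E -> K) (c : E -> K -> 'F_2) (u : K -> E).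
Hypotheses (clsu : forall k, cls (u k) = k) (cu : forall k m, c (u k) m = (m == k)%:R).

Definition Hfree (I : {set K}) := forall sg : K -> E, (forall k, k \in I -> cls (sg k) = k) ->
  forall Q : {set K}, Q \subset I -> Q != set0 ->
  exists2 m, m \in I & \sum_(k in Q) c (sg k) m != 0.

Lemma Hfree_del (I : {set K}) k : k \in I -> Hfree I -> Hfree (I :\ k).
Proof.
move=> kI HI sg hsg Q sQ Q0.
pose sg' k' := if k' == k then u k else sg k'.
have hsg' : forall k', k' \in I -> cls (sg' k') = k'.
  move=> k' k'I; rewrite /sg'; case: eqP => [->|/eqP nk]; first exact: clsu.
  by apply: hsg; rewrite !inE nk.
have kQ : k \notin Q by apply/negP => /(subsetP sQ); rewrite !inE eqxx.
have eqS : forall m, \sum_(k' in Q) c (sg' k') m = \sum_(k' in Q) c (sg k') m.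
  move=> m; apply: eq_bigr => k' k'Q; rewrite /sg'; case: eqP => // ek.
  by rewrite -ek k'Q in kQ.
have sQI : Q \subset I by apply: subset_trans sQ (subsetDl _ _).
have [m mI] := HI sg' hsg' Q sQI Q0; rewrite eqS => hm.
have [mk|mk] := eqVneq m k; last by exists m; rewrite // !inE mk.
have sQI' : k |: Q \subset I by rewrite subUset sub1set kI sQI.
have [m' m'I] := HI sg' hsg' (k |: Q) sQI' (setU1_neq0 _ _) .
rewrite big_setU1 //= eqS {1}/sg' eqxx cu.
have [m'k|m'k] := eqVneq m' k.
  by rewrite m'k mulr1n -mk (F2_neq0 hm) F2_11 eqxx.
by rewrite mulr0n add0r => h; exists m'; rewrite // !inE m'k.
Qed.

Lemma source (I : {set K}) : I != set0 -> Hfree I ->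
  exists2 j, j \in I & forall x, cls x \in I -> cls x != j -> c x j = 0.
Proof.
move: {2}#|I| (leqnn #|I|) => N; elim: N I => [|N IH] I.
  by rewrite leqn0 cards_eq0 => ->.
move=> hN I0 HI.
have [/eqP/cards1P[j ->]|n1] := eqVneq #|I| 1%N.
  by exists j; rewrite ?inE // => x /[!inE] ->.
have [/existsP[j /andP[jI /forallP hj]]|nosrc] :=
  boolP [exists j, (j \in I) && [forall x, (cls x \in I) ==> (cls x != j) ==> (c x j == 0)]].
  by exists j => // x xI xj; move: (hj x); rewrite xI xj => /eqP.
exfalso.
have I2 : (1 < #|I|)%N.
  by rewrite ltn_neqAle eq_sym n1 card_gt0.
have Ik0 : forall k, k \in I -> I :\ k != set0.
  move=> k kI; rewrite -card_gt0; move: I2.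
  by rewrite (cardsD1 k I) kI add1n ltnS.
pose Pj k j := (j \in I :\ k) && [forall x, (cls x \in I :\ k) ==> (cls x != j) ==> (c x j == 0)].
pose J k := odflt k [pick j | Pj k j].
have PJ : forall k, k \in I -> Pj k (J k).
  move=> k kI; rewrite /J; case: pickP => [j //|none].
  have [|j jI hj] := IH (I :\ k) _ (Ik0 k kI) (Hfree_del kI HI).
    by rewrite (cardsD1 k I) kI add1n ltnS in hN.
  exfalso; move: (none j); rewrite /Pj jI /=; move/negbT/negP; apply.
  by apply/forallP => x; apply/implyP => xI; apply/implyP => xj; rewrite hj.
have JI : forall k, k \in I -> J k \in I.
  by move=> k /PJ /andP[] /[!inE] /andP[].
have Jk : forall k, k \in I -> J k != k.
  by move=> k /PJ /andP[] /[!inE] /andP[].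
have inJ : forall k x, k \in I -> cls x \in I -> cls x != J k -> c x (J k) != 0 -> cls x = k.
  move=> k x kI xI xJ cx; apply/eqP; apply: contraR cx => xk.
  case/PJ/andP: kI => _ /forallP/(_ x).
  by rewrite !inE xk xI xJ /= => /eqP ->.
have nosrc' : forall j, j \in I -> exists x, [&& cls x \in I, cls x != j & c x j != 0].
  move=> j jI; move/negP: nosrc => ns.
  have : ~~ [forall x, (cls x \in I) ==> (cls x != j) ==> (c x j == 0)].
    by apply/negP => h; apply: ns; apply/existsP; exists j; rewrite jI.
  rewrite negb_forall => /existsP[x]; rewrite !negb_imply => hx; exists x.
  by case/and3P: hx => -> -> ->.
have arcJ : forall k, k \in I -> exists x, (cls x == k) && (c x (J k) != 0).
  move=> k kI; have [x /and3P[xI xJ cx]] := nosrc' _ (JI k kI).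
  by exists x; rewrite cx (inJ k x kI xI xJ cx) eqxx.
have Jinj : {in I &, injective J}.
  move=> k1 k2 k1I k2I e; have [x /andP[/eqP xk cx]] := arcJ k1 k1I.
  have xI : cls x \in I by rewrite xk.
  have xJ : cls x != J k2 by rewrite xk -e eq_sym Jk.
  by rewrite -xk; apply: (inJ k2 x k2I xI xJ); rewrite -e.
have JII : J @: I = I.
  apply/eqP; rewrite eqEcard card_in_imset // leqnn andbT.
  by apply/subsetP => _ /imsetP[k kI ->]; apply: JI.
have Out : forall k x m, k \in I -> cls x = k -> m \in I -> m != k -> c x m != 0 -> m = J k.
  move=> k x m kI xk mI mk cx.
  rewrite -JII in mI; case/imsetP: mI => k' k'I mJ.
  have xI : cls x \in I by rewrite xk.
  have e : k = k'.
    rewrite -xk; apply: (inJ k' x k'I xI); first by rewrite xk -mJ eq_sym.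
    by rewrite -mJ.
  by rewrite mJ e.
pose sg k := odflt (u k) [pick x | (cls x == k) && (c x (J k) != 0)].
have Psg : forall k, k \in I -> (cls (sg k) == k) && (c (sg k) (J k) != 0).
  move=> k kI; rewrite /sg; case: pickP => [x //|none].
  by have [x hx] := arcJ k kI; rewrite none in hx.
have clsg : forall k, k \in I -> cls (sg k) = k by move=> k /Psg/andP[/eqP].
have diag : forall k, k \in I -> c (sg k) k = 1.
  move=> k kI; apply: F2_neq0; apply/negP => /eqP c0.
  pose sg' k' := if k' == k then sg k else u k'.
  have hsg' : forall k', k' \in I -> cls (sg' k') = k'.
    by move=> k' k'I; rewrite /sg'; case: eqP => [->|_]; [apply: clsg|apply: clsu].
  have sQ : [set k; J k] \subset I by rewrite subUset !sub1set kI JI.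
  have [m mI] := HI sg' hsg' _ sQ (setU1_neq0 _ _).
  have kJ : k \notin [set J k] by rewrite inE eq_sym Jk.
  rewrite big_setU1 //= big_set1 /sg' eqxx (negPf (Jk k kI)) cu.
  have [->|mk] := eqVneq m k; first by rewrite c0 (eq_sym k (J k)) (negPf (Jk k kI)) mulr0n addr0 eqxx.
  have [->|mJ] := eqVneq m (J k).
    by rewrite mulr1n (F2_neq0 (proj2 (andP (Psg k kI)))) F2_11 eqxx.
  rewrite mulr0n addr0.
  by move=> h; move/eqP: mJ; apply; apply: Out (clsg k kI) mI mk h.
have [m mI] := HI sg clsg I (subxx I) I0.
apply/negP; rewrite negbK.
have pw : forall k, k \in I -> c (sg k) m = (k == m)%:R + (J k == m)%:R.
  move=> k kI; have [->|km] := eqVneq k m.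
    by rewrite diag // (negPf (Jk _ mI)) mulr0n addr0.
  rewrite mulr0n add0r; case: (F2_cases (c (sg k) m)) => h.
    case: eqVneq => // Jm; move: (Psg k kI).
    by rewrite Jm h eqxx andbF.
  have mk : m != k by rewrite eq_sym.
  have cm : c (sg k) m != 0 by rewrite h.
  by rewrite h -(Out k (sg k) m kI (clsg k kI) mI mk cm) eqxx.
rewrite (eq_bigr _ pw) big_split /=.
rewrite (bigD1 m) //= eqxx big1 ?addr0; last by move=> k /andP[_ /negPf ->].
have : m \in J @: I by rewrite JII.
case/imsetP=> k0 k0I ->.
rewrite (bigD1 k0) //= eqxx big1 ?addr0 ?F2_11 //.
move=> k /andP[kI kk0]; case: eqVneq => // /(Jinj _ _ kI k0I) e.
by rewrite e eqxx in kk0.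
Qed.
End Source.

Lemma F2_pow2 n : ((2 ^ n)%N%:R : 'F_2) = (n == 0%N)%:R.
Proof. by rewrite F2_nat oddX orbF. Qed.

Lemma disjointsU (T : finType) (S b y : {set T}) :
  [disjoint S & b :|: y] = [disjoint S & b] && [disjoint S & y].
Proof. by rewrite !disjoints_subset setCU subsetI. Qed.

Lemma pw_count (T : finType) (X p : {set T}) :
  \sum_(S in powerset X) ([disjoint S & p]%:R : 'F_2) = (X \subset p)%:R.
Proof.
have E : forall b : bool, (b%:R : 'F_2) = if b then 1 else 0 by case.
rewrite (eq_bigr _ (fun S _ => E _)) -big_mkcondr /= sumr_const.
have -> : #|[pred S in powerset X | [disjoint S & p]]| = #|powerset (X :\: p)|.
  by apply: eq_card => S; rewrite !inE ?powersetE subsetD.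
by rewrite card_powerset F2_pow2 cards_eq0 setD_eq0.
Qed.

Section RM.
Variable r : nat.
Local Notation Pt := {set 'I_(r + r)}.

Definition Mon : {set Pt} := [set S : Pt | (#|S| <= r)%N].
Lemma set0_Mon : set0 \in Mon.
Proof. by rewrite inE cards0. Qed.

Definition fv (p : Pt) : 'rV['F_2]_#|Mon| :=
  \row_(i < #|Mon|) ([disjoint (enum_val i : Pt) & p]%:R).

Definition ev (w : Pt -> 'F_2) (p : Pt) :=
  \sum_(S in Mon) w S * [disjoint S & p]%:R.

Lemma lin_ev (phi : {scalar 'rV['F_2]_#|Mon|}) p :
  phi (fv p) = ev (fun S => phi (delta_mx 0 (enum_rank_in set0_Mon S))) p.
Proof.
rewrite [fv p]row_sum_delta linear_sum /ev [in RHS]big_enum_val /=.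
apply: eq_bigr => i _; rewrite linearZ /= mxE enum_valK_in mulrC.
by [].
Qed.

Lemma fv_neq0 p : fv p != 0.
Proof.
apply/negP => /eqP /rowP /(_ (enum_rank_in set0_Mon set0)).
by rewrite !mxE enum_rankK_in ?set0_Mon // disjoints_subset sub0set.
Qed.

Lemma coord_eq (A : {set Pt}) (lam : Pt -> 'F_2) :
  \sum_(p in A) lam p *: fv p = 0 ->
  forall S, S \in Mon -> \sum_(p in A) lam p * [disjoint S & p]%:R = 0.
Proof.
move=> h S SM.
transitivity (\sum_(p in A) (lam p *: fv p) 0 (enum_rank_in set0_Mon S)).
  by apply: eq_bigr => p _; rewrite !mxE enum_rankK_in.
by rewrite -summxE h mxE.
Qed.

Lemma card_pt (q : Pt) : (#|q| + #|~: q| = r + r)%N.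
Proof. by rewrite cardsC card_ord. Qed.

Lemma indep_high : vindep fv [set p : Pt | (r <= #|p|)%N].
Proof.
apply/(vindepP fv) => lam h p0 p0A; apply/eqP; apply/negP => /negP l0.
pose P := fun p => (p \in [set p : Pt | (r <= #|p|)%N]) && (lam p != 0).
have P0 : P p0 by rewrite /P p0A l0.
case: (arg_minnP (fun p : Pt => #|p|) P0) => q /andP[qA lq] qmin.
have SM : ~: q \in Mon.
  rewrite inE; move: qA; rewrite inE; have := card_pt q; lia.
have := coord_eq h SM.
rewrite (bigD1 q) //= big1 ?addr0.
  rewrite disjoint_sym disjoints_subset setCK subxx mulr1 => /eqP.
  by rewrite (negPf lq).
move=> p /andP[pA pq]; rewrite disjoint_sym disjoints_subset setCK.
have [sub|] := boolP (p \subset q); last by rewrite mulr0n mulr0.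
have [lp0|lp] := eqVneq (lam p) 0; first by rewrite lp0 mul0r.
have : (#|q| <= #|p|)%N by apply: qmin; rewrite /P pA lp.
have : p \proper q by rewrite properEneq pq sub.
by move/proper_card => lt le; move: (leq_trans lt le); rewrite ltnn.
Qed.

Lemma indep_low : vindep fv [set p : Pt | (#|p| <= r)%N].
Proof.
apply/(vindepP fv) => lam h p0 p0A; apply/eqP; apply/negP => /negP l0.
pose P := fun p => (p \in [set p : Pt | (#|p| <= r)%N]) && (lam p != 0).
have P0 : P p0 by rewrite /P p0A l0.
case: (arg_maxnP (fun p : Pt => #|p|) P0) => q /andP[qA lq] qmax.
have : \sum_(S in powerset q) \sum_(p in [set p : Pt | (#|p| <= r)%N])
          lam p * [disjoint S & p]%:R = 0.
  apply: big1 => S; rewrite powersetE => Sq; apply: (coord_eq h).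
  rewrite inE; apply: leq_trans (subset_leq_card Sq) _; by move: qA; rewrite inE.
rewrite exchange_big /=.
under eq_bigr => p _ do rewrite -mulr_sumr pw_count.
rewrite (bigD1 q) //= subxx mulr1 big1 ?addr0.
  by move/eqP; rewrite (negPf lq).
move=> p /andP[pA pq].
have [sub|] := boolP (q \subset p); last by rewrite mulr0n mulr0.
have [lp0|lp] := eqVneq (lam p) 0; first by rewrite lp0 mul0r.
have : (#|p| <= #|q|)%N by apply: qmax; rewrite /P pA lp.
have : q \proper p by rewrite properEneq eq_sym pq sub.
by move/proper_card => lt le; move: (leq_trans lt le); rewrite ltnn.
Qed.

Lemma weight (w : Pt -> 'F_2) : (exists p, ev w p != 0) ->
  (2 ^ r <= #|[set p : Pt | ev w p != 0%R]|)%N.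
Proof.
case=> p0 hp0.
have [S1 hS1] : exists S, (S \in Mon) && (w S != 0).
  have [/existsP[S hS]|none] := boolP [exists S, (S \in Mon) && (w S != 0)].
    by exists S.
  exfalso; move/negP: hp0; apply; rewrite /ev big1 // => S SM.
  move: none; rewrite negb_exists => /forallP /(_ S); rewrite SM /= negbK.
  by move/eqP ->; rewrite mul0r.
pose P := fun S => (S \in Mon) && (w S != 0).
case: (arg_maxnP (fun S : Pt => #|S|) (P := P) hS1) => S0 /andP[S0M wS0] S0max.
have key : forall b : Pt, b \subset ~: S0 ->
    \sum_(y in powerset S0) ev w (b :|: y) = w S0.
  move=> b bS0.
  have gen : forall S, \sum_(y in powerset S0) w S * [disjoint S & b :|: y]%:R =
                       w S * [disjoint S & b]%:R * (S0 \subset S)%:R.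
    move=> S; rewrite -pw_count mulr_sumr; apply: eq_bigr => y _.
    rewrite disjointsU (disjoint_sym y S).
    by case: [disjoint S & b] => /=; rewrite ?mulr1 ?mulr0n ?mulr0 ?mul0r.
  rewrite /ev exchange_big /=.
  under eq_bigr => S _ do rewrite gen.
  rewrite (bigD1 S0) //= big1 ?addr0.
    by rewrite subxx disjoint_sym disjoints_subset bS0 !mulr1.
  move=> S /andP[SM SS0].
  have [sub|] := boolP (S0 \subset S); last by rewrite mulr0n mulr0.
  have [wS|wS] := eqVneq (w S) 0; first by rewrite wS !mul0r.
  have : (#|S| <= #|S0|)%N by apply: S0max; rewrite /P SM wS.
  move/(conj sub)/andP; rewrite -eqEcard => /eqP eS.
  by rewrite eS eqxx in SS0.
have ex : forall b : Pt, b \subset ~: S0 ->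
    exists2 y, y \in powerset S0 & ev w (b :|: y) != 0.
  move=> b bS.
  have [/exists_inP[y yP hy]|none] := boolP [exists y in powerset S0, ev w (b :|: y) != 0].
    by exists y.
  exfalso; move/negP: wS0; apply; rewrite -(key b bS) big1 // => y yP.
  by move: none; rewrite negb_exists_in => /forall_inP /(_ y yP); rewrite negbK => /eqP.
pose yy (b : Pt) := odflt set0 [pick y in powerset S0 | ev w (b :|: y) != 0].
pose h (b : Pt) := b :|: yy b.
have hP : forall b : Pt, b \subset ~: S0 -> (yy b \subset S0) && (ev w (h b) != 0).
  move=> b bS; rewrite /h /yy; case: pickP => [y /andP[yP hy]|none].
    by rewrite -powersetE yP.
  by have [y yP hy] := ex b bS; move: (none y); rewrite yP hy.
have hinj : {in powerset (~: S0) &, injective h}.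
  have E : forall b : Pt, b \subset ~: S0 -> h b :&: ~: S0 = b.
    move=> b bS; rewrite /h setIUl (setIidPl bS).
    case/andP: (hP b bS) => yS _.
    have -> : yy b :&: ~: S0 = set0.
      by apply/setP => x; rewrite !inE; case xy: (x \in yy b); rewrite //= (subsetP yS).
    by rewrite setU0.
  move=> b1 b2; rewrite !powersetE => b1S b2S e.
  by rewrite -(E b1 b1S) -(E b2 b2S) e.
have : (#|h @: powerset (~: S0)| <= #|[set p : Pt | ev w p != 0%R]|)%N.
  apply: subset_leq_card; apply/subsetP => _ /imsetP[b bP ->]; rewrite inE.
  by rewrite powersetE in bP; case/andP: (hP b bP).
rewrite card_in_imset // card_powerset; apply: leq_trans.
rewrite leq_exp2l //.
move: S0M; rewrite inE; have := card_pt S0; lia.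
Qed.

End RM.

Lemma rainbow_indep (T : finType) (M : matroid T) (P : {set {set T}}) :
  rainbow_circuit_free M P -> forall A, rainbow P A -> indep M A.
Proof.
move=> rcf A rA; case iA: (indep M A) => //; have nA : ~~ indep M A by rewrite iA.
exfalso.
pose Q := fun C : {set T} => (C \subset A) && ~~ indep M C.
have QA : Q A by rewrite /Q subxx nA.
case: (arg_minnP (fun C : {set T} => #|C|) QA) => C /andP[CA nC] Cmin.
apply: (rcf C).
  rewrite /circuit nC /=; apply/forallP => D; apply/implyP => DC.
  apply/negPn/negP => nD.
  have : (#|C| <= #|D|)%N.
    by apply: Cmin; rewrite /Q nD andbT (subset_trans (proper_sub DC) CA).
  by rewrite leqNgt proper_card.
by move=> x y xC yC; apply: rA; apply: (subsetP CA).
Qed.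

Lemma mrank_ge (T : finType) (M : matroid T) A : indep M A -> (#|A| <= mrank M)%N.
Proof. by move=> iA; rewrite /mrank; apply: (@leq_bigmax_cond _ (indep M) (fun A => #|A|)). Qed.

Section MainGeneric.
Variables (T : finType) (x0 : T) (n : nat) (f : T -> 'rV['F_2]_n) (g : nat).
Hypothesis Hw : forall phi : {scalar 'rV['F_2]_n},
  (exists p, phi (f p) != 0) -> (g <= #|[set p | phi (f p) != 0%R]|)%N.

Lemma main_generic (P : {set {set T}}) :
  coloring P -> rank_preserving (vmatroid f) P ->
  rainbow_circuit_free (vmatroid f) P -> exists2 B, B \in P & (g <= #|B|)%N.
Proof.
rewrite /coloring /rank_preserving => /and3P[/eqP covP trP s0P] rkP rcf.
set M := vmatroid f in rkP rcf.
have inC : forall x, x \in cover P by move=> x; rewrite covP inE.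
have pbP : forall x, pblock P x \in P by move=> x; apply: pblock_mem.
have xpb : forall x, x \in pblock P x by move=> x; rewrite mem_pblock.
pose rep (B : {set T}) := odflt x0 [pick x in B].
have repB : forall B, B \in P -> rep B \in B.
  move=> B BP; rewrite /rep; case: pickP => [x //|none].
  have : B != set0 by apply: contraNneq s0P => <-.
  by case/set0Pn => x xB; move: (none x); rewrite xB.
have pbrep : forall B, B \in P -> pblock P (rep B) = B.
  by move=> B BP; apply: def_pblock => //; apply: repB.
pose S := rep @: P.
have Sinj : {in P &, injective rep}.
  by move=> B1 B2 B1P B2P e; rewrite -(pbrep B1 B1P) -(pbrep B2 B2P) e.
have cardS : #|S| = #|P| by rewrite card_in_imset.
have rainS : rainbow P S.
  move=> _ _ /imsetP[B1 B1P ->] /imsetP[B2 B2P ->].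
  by rewrite !pbrep // => ->.
have iS : indep M S by apply: rainbow_indep rcf _ rainS.
have spanS : forall x, f x \in <<map f (enum S)>>%VS.
  move=> x; have [xS|xS] := boolP (x \in S).
    by apply: memv_span; apply: map_f; rewrite mem_enum.
  apply/negPn/negP => nsp.
  have : indep M (x |: S) by rewrite /= vindepU1 // nsp.
  move/mrank_ge; rewrite -rkP -cardS cardsU1 xS.
  by rewrite ltnn.
pose s := enum S.
pose X := in_tuple (map f s).
have fX : free X by [].
pose N := size (map f s).
have sizeN : N = size s by rewrite /N size_map.
have clsP : forall x, (index (rep (pblock P x)) s < N)%N.
  move=> x; rewrite sizeN index_mem mem_enum; apply: imset_f; apply: pbP.
pose cls x : 'I_N := Ordinal (clsP x).
pose u (i : 'I_N) := nth x0 s i.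
have uS : forall i : 'I_N, u i \in S.
  by move=> i; rewrite -mem_enum; apply: mem_nth; rewrite -sizeN.
have Xu : forall i : 'I_N, X`_i = f (u i).
  by move=> i; rewrite /= (nth_map x0) // -sizeN.
have repu : forall i : 'I_N, rep (pblock P (u i)) = u i.
  move=> i; case/imsetP: (uS i) => B BP ->; by rewrite pbrep.
have clsu : forall i, cls (u i) = i.
  move=> i; apply: val_inj => /=; rewrite repu index_uniq ?enum_uniq //.
  by rewrite -sizeN.
pose c x i := coord X i (f x).
have cu : forall k m, c (u k) m = (m == k)%:R.
  by move=> k m; rewrite /c -Xu coord_free // eq_sym.
have fexp : forall x, f x = \sum_i c x i *: X`_i.
  by move=> x; apply: coord_span; apply: spanS.
have HF : Hfree cls c setT.
  move=> sg hsg Q _ Q0.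
  have [/existsP[m hm]|none] := boolP [exists m, \sum_(k in Q) c (sg k) m != 0].
    by exists m.
  exfalso.
  have sginj : injective sg.
    by move=> k1 k2 e; rewrite -(hsg k1) ?inE // -(hsg k2) ?inE // e.
  have rA : rainbow P (sg @: Q).
    move=> _ _ /imsetP[k1 _ ->] /imsetP[k2 _ ->] e.
    have : cls (sg k1) = cls (sg k2) by apply: val_inj; rewrite /= e.
    by rewrite !hsg ?inE // => ->.
  have iA : indep M (sg @: Q) by apply: rainbow_indep rcf _ rA.
  have sum0 : \sum_(p in sg @: Q) 1 *: f p = 0.
    rewrite big_imset /=; last by move=> k1 k2 _ _; apply: sginj.
    under eq_bigr => k _ do rewrite scale1r fexp.
    rewrite exchange_big /=; apply: big1 => i _.
    rewrite -scaler_suml.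
    move: none; rewrite negb_exists => /forallP /(_ i); rewrite negbK => /eqP ->.
    by rewrite scale0r.
  case/set0Pn: Q0 => k kQ.
  have := proj1 (vindepP f _) iA (fun _ => 1) sum0 (sg k) (imset_f _ kQ).
  by move/eqP; rewrite oner_eq0.
have T0 : [set: 'I_N] != set0 by apply/set0Pn; exists (cls x0); rewrite inE.
have [j _ hj] := source clsu cu T0 HF.
pose B := pblock P (u j).
exists B; first exact: pbP.
have cls_j : forall x, cls x = j -> pblock P x = B.
  move=> x /(congr1 val) /= e.
  have : rep (pblock P x) = u j.
    rewrite /u -e nth_index //; rewrite mem_enum; apply: imset_f; apply: pbP.
  by rewrite /B => <-; rewrite pbrep // pbP.
have sub : [set p | coord X j (f p) != 0%R] \subset B.
  apply/subsetP => x; rewrite inE => cx.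
  have : cls x = j.
    by apply/eqP; apply: contraR cx => nj; rewrite -/(c x j) (hj x) ?inE // eqxx.
  by move/cls_j <-.
apply: leq_trans (subset_leq_card sub); apply: Hw.
exists (u j); change (c (u j) j != 0); by rewrite cu eqxx oner_eq0.
Qed.
End MainGeneric.

Theorem theorem6 (g : nat) (hg : (0 < g)%N) :
  exists (T : finType) (M : matroid T),
    coverable M 2 /\ loopless M /\ binary M /\
    forall P : {set {set T}}, coloring P -> rank_preserving M P ->
      rainbow_circuit_free M P -> exists2 B, B \in P & (g <= #|B|)%N.
Proof.
exists {set 'I_(g + g)}, (vmatroid (@fv g)).
split.
  exists [:: [set p : {set 'I_(g + g)} | (#|p| <= g)%N];
             [set p : {set 'I_(g + g)} | (g <= #|p|)%N]]; split => //.
  split; first by rewrite /= indep_low indep_high.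
  rewrite !big_cons big_nil setU0; apply/setP => p; rewrite !inE.
  exact: leq_total.
split.
  move=> C /andP[nC _] /eqP /cards1P[x Cx].
  move: nC; rewrite Cx /= /vindep enum_set1 /= seq1_free.
  by rewrite fv_neq0.
split; first by exists #|Mon g|, (@fv g).
apply: main_generic => [|phi [p hp]]; first exact: set0.
pose w := fun S => phi (delta_mx 0 (enum_rank_in (set0_Mon g) S)).
have E : forall q, phi (fv q) = ev w q by move=> q; rewrite lin_ev.
have -> : #|[set q | phi (fv q) != 0%R]| = #|[set q | ev w q != 0%R]|.
  by apply: eq_card => q; rewrite !inE E.
apply: leq_trans (weight _); first exact: ltnW (ltn_expl _ (ltnSn 1)).
by exists p; rewrite -E.
Qed.
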